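(* Let $(M,g)$ be a complete oriented four-dimensional Einstein manifold with $\mathrm{Ric}=g$ whose sectional curvature satisfies $K\le \frac{\sqrt3}{2}$. Fix $o\in M$ and a Berger basis $\{e_1,\dots,e_4\}$ at $o$ (see context), and let $a_1,a_2,a_3,c_1,c_2,c_3$ and $I$ be defined from it as in the context. Suppose that at $o$ the minimal sectional curvature satisfies $K_{12}\le-\epsilon<0$ for some constant $\epsilon>0$. Then: (1) if $a_2\ge 0$ and $c_2\ge 0$, then $I\ge \frac{16}{3}\epsilon$; (2) if $a_2<0$ or $c_2<0$, then $I>\frac14\epsilon$.
   Context: Curvature conventions: $R_{ijkl}=R(e_i,e_j,e_k,e_l)$ with $K_{ij}=R_{ijij}$ the sectional curvature of the plane spanned by $e_i,e_j$. A Berger basis at $o$ is a positively oriented orthonormal basis $\{e_i\}$ of $T_oM$ such that: (1) $K_{12}=\min\{K(\pi):\pi\subset T_oM\}$; (2) $K_{14}=\max\{K(\pi):\pi\subset T_oM\}$; (3) $R_{ikjk}=0$ for all $i\ne j$; (4) $|R_{1342}-R_{1234}|\le K_{13}-K_{12}$, $|R_{1423}-R_{1342}|\le K_{14}-K_{13}$, $|R_{1423}-R_{1234}|\le K_{14}-K_{12}$ (such a basis exists at every point of an oriented Einstein four-manifold, by Berger). Define $a_1=2(K_{12}+R_{1234})$, $a_2=2(K_{13}+R_{1342})$, $a_3=2(K_{14}+R_{1423})$, $c_1=2(K_{12}-R_{1234})$, $c_2=2(K_{13}-R_{1342})$, $c_3=2(K_{14}-R_{1423})$; these are the eigenvalues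 of the curvature operator restricted to self-dual and anti-self-dual 2-forms respectively, with $a_1\le a_2\le a_3$ and $c_1\le c_2\le c_3$. Define $$I=(c_2-c_1)c_3+(c_3-c_1)c_2+(a_2-a_1)a_3+(a_3-a_1)a_2 .$$ *)

(* Defs.v *)
(* Pointwise (algebraic) model of the curvature tensor of an
   oriented Riemannian 4-manifold at a point o, written in components with
   respect to the (Berger) orthonormal basis e_1..e_4 = standard basis of R^4. *)
From HB Require Import structures.
From mathcomp Require Import all_boot all_order all_algebra.
From mathcomp Require Import reals.
Set Implicit Arguments. Unset Strict Implicit. Unset Printing Implicit Defensive.
Import Order.TTheory GRing.Theory Num.Theory.
Local Open Scope ring_scope.

(* components R_{ijkl} = R(e_i,e_j,e_k,e_l), indices 0..3 standing for 1..4 *)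
Definition tensor4 (R : realType) := 'I_4 -> 'I_4 -> 'I_4 -> 'I_4 -> R.

Definition e1 : 'I_4 := @Ordinal 4 0 isT.
Definition e2 : 'I_4 := @Ordinal 4 1 isT.
Definition e3 : 'I_4 := @Ordinal 4 2 isT.
Definition e4 : 'I_4 := @Ordinal 4 3 isT.

Definition curvature_tensor (R : realType) (Rm : tensor4 R) : Prop :=
  [/\ (forall i j k l, Rm i j k l = - Rm j i k l),
      (forall i j k l, Rm i j k l = - Rm i j l k),
      (forall i j k l, Rm i j k l = Rm k l i j) &
      (forall i j k l, Rm i j k l + Rm j k i l + Rm k i j l = 0)].

Definition Reval (R : realType) (Rm : tensor4 R) (u v w z : 'I_4 -> R) : R :=
  \sum_i \sum_j \sum_k \sum_l u i * v j * w k * z l * Rm i j k l.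

Definition orthonormal2 (R : realType) (u v : 'I_4 -> R) : Prop :=
  [/\ \sum_i u i * u i = 1, \sum_i v i * v i = 1 & \sum_i u i * v i = 0].

Definition sec (R : realType) (Rm : tensor4 R) (u v : 'I_4 -> R) : R :=
  Reval Rm u v u v.

Definition einstein_Ric_eq_g (R : realType) (Rm : tensor4 R) : Prop :=
  forall i j, \sum_k Rm i k j k = (i == j)%:R.

Definition Kc (R : realType) (Rm : tensor4 R) (i j : 'I_4) : R := Rm i j i j.

Definition berger_basis (R : realType) (Rm : tensor4 R) : Prop :=
  [/\ (forall u v, orthonormal2 u v -> Kc Rm e1 e2 <= sec Rm u v),
      (forall u v, orthonormal2 u v -> sec Rm u v <= Kc Rm e1 e4),
      (forall i j k, i != j -> Rm i k j k = 0) &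
      [/\ `|Rm e1 e3 e4 e2 - Rm e1 e2 e3 e4| <= Kc Rm e1 e3 - Kc Rm e1 e2,
          `|Rm e1 e4 e2 e3 - Rm e1 e3 e4 e2| <= Kc Rm e1 e4 - Kc Rm e1 e3 &
          `|Rm e1 e4 e2 e3 - Rm e1 e2 e3 e4| <= Kc Rm e1 e4 - Kc Rm e1 e2]].

Section ACdefs.
Variables (R : realType) (Rm : tensor4 R).
Definition a1 := 2 * (Kc Rm e1 e2 + Rm e1 e2 e3 e4).
Definition a2 := 2 * (Kc Rm e1 e3 + Rm e1 e3 e4 e2).
Definition a3 := 2 * (Kc Rm e1 e4 + Rm e1 e4 e2 e3).
Definition c1 := 2 * (Kc Rm e1 e2 - Rm e1 e2 e3 e4).
Definition c2 := 2 * (Kc Rm e1 e3 - Rm e1 e3 e4 e2).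
Definition c3 := 2 * (Kc Rm e1 e4 - Rm e1 e4 e2 e3).
Definition Iq := (c2 - c1) * c3 + (c3 - c1) * c2 + (a2 - a1) * a3 + (a3 - a1) * a2.
End ACdefs.

(* Main.v *)
Require Import Defs.
From HB Require Import structures.
From mathcomp Require Import all_boot all_order all_algebra.
From mathcomp Require Import reals.
From mathcomp Require Import ring lra.
Import Order.TTheory GRing.Theory Num.Theory.
Local Open Scope ring_scope.

Lemma sum4 (R : realType) (F : 'I_4 -> R) : \sum_i F i = F e1 + F e2 + F e3 + F e4.
Proof.
rewrite !big_ord_recl big_ord0 addr0 !addrA.
by congr (_ + _ + _ + _); congr F; apply: val_inj.
Qed.

Definition dv (R : realType) (a : 'I_4) : 'I_4 -> R := fun i => (i == a)%:R.

Lemma sumD (R : realType) (F : 'I_4 -> R) a : \sum_i dv R a i * F i = F a.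
Proof.
rewrite (bigD1 a) //= /dv eqxx mul1r big1 ?addr0 // => i /negbTE ->; by rewrite mul0r.
Qed.

Lemma Reval_dv (R : realType) (Rm : tensor4 R) a b c d :
  Reval Rm (dv R a) (dv R b) (dv R c) (dv R d) = Rm a b c d.
Proof.
rewrite /Reval.
have -> : \sum_i \sum_j \sum_k \sum_l dv R a i * dv R b j * dv R c k * dv R d l * Rm i j k l
  = \sum_i dv R a i * \sum_j dv R b j * \sum_k dv R c k * \sum_l dv R d l * Rm i j k l.
  apply: eq_bigr => i _; rewrite mulr_sumr; apply: eq_bigr => j _.
  rewrite mulr_sumr mulr_sumr; apply: eq_bigr => k _.
  rewrite mulr_sumr mulr_sumr mulr_sumr; apply: eq_bigr => l _.
  by rewrite !mulrA.
by rewrite sumD sumD sumD sumD.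
Qed.

Lemma ortho_dv (R : realType) a b : a != b -> orthonormal2 (dv R a) (dv R b).
Proof.
move=> ab; split.
- by rewrite (@sumD R (dv R a)) /dv eqxx.
- by rewrite (@sumD R (dv R b)) /dv eqxx.
- by rewrite (@sumD R (dv R b)) /dv (negbTE ab).
Qed.
Lemma core2 (R : realFieldType) (p q w bet alp P : R) :
  3 * P * P + 12 * P - 4 = 0 -> 0 <= alp -> 0 < bet -> 0 <= p -> 0 <= q -> 0 <= w ->
  9  *  (P - p) = 2 * alp + bet + 3 * q + 3 * w -> 0 < P -> P < 2/3 ->
  bet < 16  *  ((6 - 18 * p - 9/2 * p * p) + 3 * q * q + 2 * bet + (2-3 * p) * (bet-3 * q) + (bet-3 * q) * (bet-3 * q)/2 - 3/2 * w * w).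
Proof.
move=> hP al0 be0 p0 q0 w0 hd P0 P1.
have I0 : 6 - 18 * p - 9/2 * p * p = (2 * alp + bet + 3 * q + 3 * w)  *  (p + P + 4) / 2.
  rewrite -hd.
  have e : 6 - 18 * p - 9/2 * p * p = 6 - 18 * p - 9/2 * p * p + 3/2 * (3 * P * P + 12 * P - 4).
    by rewrite hP mulr0 addr0.
  by rewrite e; field.
rewrite I0.
have pP : p <= P by lra.
have w3 : w <= 3  *  P by lra.
have k1 : 0 <= alp  *  (p + P + 4) by apply: mulr_ge0; lra.
have k2 : 0 <= bet  *  (p + P) by apply: mulr_ge0; lra.
have k3 : 0 <= q  *  (p + P) by apply: mulr_ge0; lra.
have k4 : 0 <= w  *  (p + P) by apply: mulr_ge0; lra.
have k5 : 0 <= w  *  (4 - w) by apply: mulr_ge0; lra.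
have k6 : 0 <= (2 - 3 * p)  *  bet by apply: mulr_ge0; lra.
have k7 : 0 <= p  *  q by apply: mulr_ge0; lra.
have k8 : 0 <= (bet-3 * q) * (bet-3 * q) by rewrite -expr2 sqr_ge0.
have k9 : 0 <= q  *  q by rewrite -expr2 sqr_ge0.
lra.
Qed.

Lemma core (R : realFieldType) (s a1 a2 c1 c2 : R) :
  s * s = 3 -> 0 < s -> a1 <= a2 -> c2 <= 2-c1-c2 ->
  (2-a1-a2)+(2-c1-c2) <= 2*s -> a2 < 0 -> 0 < -(a1+c1) ->
  -(a1+c1) < 16 * ((c2-c1)*(2-c1-c2) + ((2-c1-c2)-c1)*c2 + (a2-a1)*(2-a1-a2) + ((2-a1-a2)-a1)*a2).
Proof.
move=> s2 s0 h1 h4 h5 h6 h7.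
have s2lt : s < 2 by nra.
have s1 : 3/2 < s by nra.
have := @core2 R (-a2) (a2-a1) ((2-c1-c2)-c2) (-3*(a1+c1)) (3*(2*s - (2-a1-a2) - (2-c1-c2))) ((4*s-6)/3).
have -> : (6 - 18 * - a2 - 9 / 2 * - a2 * - a2 + 3 * (a2 - a1) * (a2 - a1) + 2 * (-3 * (a1 + c1)) +
     (2 - 3 * - a2) * (-3 * (a1 + c1) - 3 * (a2 - a1)) +
     (-3 * (a1 + c1) - 3 * (a2 - a1)) * (-3 * (a1 + c1) - 3 * (a2 - a1)) / 2 -
     3 / 2 * (2 - c1 - c2 - c2) * (2 - c1 - c2 - c2)) = 3 * ((c2-c1)*(2-c1-c2) + ((2-c1-c2)-c1)*c2 + (a2-a1)*(2-a1-a2) + ((2-a1-a2)-a1)*a2).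
  by field.
move=> H.
have HP : 3 * ((4*s-6)/3) * ((4*s-6)/3) + 12 * ((4*s-6)/3) - 4 = 0.
  have -> : 3 * ((4*s-6)/3) * ((4*s-6)/3) + 12 * ((4*s-6)/3) - 4 = (16 * (s*s) - 48 * s + 36)/3 + 16*s - 28 by field.
  by rewrite s2; field.
have := H HP; clear H => H.
have Hd : 9 * ((4 * s - 6) / 3 - - a2) = 2 * (3 * (2 * s - (2 - a1 - a2) - (2 - c1 - c2))) + -3 * (a1 + c1) + 3 * (a2 - a1) + 3 * (2 - c1 - c2 - c2) by field.
have := H _ _ _ _ _ Hd; lra.
Qed.

Theorem lemma2p2 (R : realType) (Rm : tensor4 R) (eps : R) :
  curvature_tensor Rm ->
  einstein_Ric_eq_g Rm ->
  (forall u v : 'I_4 -> R, orthonormal2 u v -> sec Rm u v <= Num.sqrt 3 / 2) ->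
  berger_basis Rm ->
  0 < eps -> Kc Rm e1 e2 <= - eps ->
  ((0 <= a2 Rm -> 0 <= c2 Rm -> 16 / 3 * eps <= Iq Rm) /\
   (a2 Rm < 0 \/ c2 Rm < 0 -> eps / 4 < Iq Rm)).
Proof.
move=> [A1 A2 A3 A4] Hein Hs [B1 B2 B3 [B41 B42 B43]] eps0 Heps.
have R1111 : Rm e1 e1 e1 e1 = 0 by have := A1 e1 e1 e1 e1; lra.
have Hric := Hein e1 e1; rewrite sum4 eqxx /= in Hric.
have Bi := A4 e1 e2 e3 e4.
have Bi2 := A3 e2 e3 e1 e4.
have Bi3 := A1 e3 e1 e2 e4.
have Bi4 := A2 e1 e3 e2 e4.
have H14 := Hs _ _ (@ortho_dv R e1 e4 isT).
rewrite /sec Reval_dv in H14.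
set s := Num.sqrt (3 : R) in H14.
have s2 : s * s = 3 by rewrite -expr2 sqr_sqrtr.
have s0 : 0 < s by rewrite sqrtr_gt0.
move: B41 B42; rewrite !ler_norml => /andP[B41 B41'] /andP[B42 B42'].
have ha3 : a3 Rm = 2 - a1 Rm - a2 Rm by rewrite /a1 /a2 /a3 /Kc in Heps *; lra.
have hc3 : c3 Rm = 2 - c1 Rm - c2 Rm by rewrite /c1 /c2 /c3 /Kc in Heps *; lra.
have o1 : a1 Rm <= a2 Rm by rewrite /a1 /a2 /Kc in B41 B41' *; lra.
have o2 : c1 Rm <= c2 Rm by rewrite /c1 /c2 /Kc in B41 B41' *; lra.
have o3 : a2 Rm <= 2 - a1 Rm - a2 Rm by rewrite -ha3 /a3 /a2 /Kc in B42 B42' *; lra.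
have o4 : c2 Rm <= 2 - c1 Rm - c2 Rm by rewrite -hc3 /c3 /c2 /Kc in B42 B42' *; lra.
have o5 : (2 - a1 Rm - a2 Rm) + (2 - c1 Rm - c2 Rm) <= 2 * s.
  rewrite -ha3 -hc3 /a3 /c3 /Kc in H14 *; lra.
have o6 : a1 Rm + c1 Rm <= - 4 * eps by rewrite /a1 /c1 /Kc in Heps *; lra.
rewrite /Iq ha3 hc3.
move: o1 o2 o3 o4 o5 o6.
move: (a1 Rm) (a2 Rm) (c1 Rm) (c2 Rm) => x1 x2 y1 y2 o1 o2 o3 o4 o5 o6.
split.
- move=> hx hy.
  have k1 : 0 <= x2 * (2 - x1 - x2) by apply: mulr_ge0; lra.
  have k2 : 0 <= y2 * (2 - y1 - y2) by apply: mulr_ge0; lra.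
  have k3 : 0 <= x1 * x1 by rewrite -expr2 sqr_ge0.
  have k4 : 0 <= y1 * y1 by rewrite -expr2 sqr_ge0.
  lra.
- case=> h.
  + have := @core R s x1 x2 y1 y2 s2 s0 o1 o4 o5 h ltac:(lra); lra.
  + have := @core R s y1 y2 x1 x2 s2 s0 o2 o3 ltac:(lra) h ltac:(lra); lra.
Qed.
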